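(* Let $\mathcal{X} \subseteq \mathbb{R}^d$ and $\mathcal{Y} = \{1,\dots,c\}$. Let $\hat{p}^r(\bm{x},\hat{y})$ be a (real) joint distribution of data and clean labels, and let the observed noisy labels arise by class-dependent corruption independent of $\bm{x}$: with transition matrix $T=(T_{i,j}) \in [0,1]^{c\times c}$, $T_{i,j} = p(\tilde{y}=j \mid \hat{y}=i)$, the real noisy joint distribution is $\tilde{p}^r(\bm{x},\tilde{y}) = \sum_{\hat{y}} T_{\hat{y},\tilde{y}}\, \hat{p}^r(\bm{x},\hat{y})$. Let $G$ be a conditional generator mapping $(\bm{z},\hat{y}^g)$, with $\bm{z}\sim p(\bm{z})$ and $\hat{y}^g \sim p(\hat{y})$, to $G(\bm{z},\hat{y}^g)$; let $\hat{p}^g(\bm{x},\hat{y})$ be the joint distribution of $(G(\bm{z},\hat{y}^g),\hat{y}^g)$, and let $\tilde{p}^g(\bm{x},\tilde{y}) = \sum_{\hat{y}} T_{\hat{y},\tilde{y}}\, \hat{p}^g(\bm{x},\hat{y})$ be the joint distribution of $(G(\bm{z},\hat{y}^g),\tilde{y}^g)$ where $\tilde{y}^g \sim p(\tilde{y}\mid \hat{y}^g)$. Consider the objective $$\mathcal{L}_{\mathrm{rcGAN}}(G,D) = \mathbb{E}_{(\bm{x}^r,\tilde{y}^r)\sim \tilde{p}^r}[\log D(\bm{x}^r,\tilde{y}^r)] + \mathbb{E}_{\bm{z}\sim p(\bm{z}),\,\hat{y}^g\sim p(\hat{y}),\,\tilde{y}^g\sim p(\tilde{y}\mid\hat{y}^g)}[\log(1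 - D(G(\bm{z},\hat{y}^g),\tilde{y}^g))],$$ where the discriminator $D:\mathcal{X}\times\mathcal{Y}\to(0,1)$ maximizes and the generator $G$ minimizes, and call $G$ optimal if it attains the global minimum over generators of $\max_D \mathcal{L}_{\mathrm{rcGAN}}(G,D)$. If $T$ is nonsingular, then $G$ is optimal if and only if $\hat{p}^g(\bm{x},\hat{y}) = \hat{p}^r(\bm{x},\hat{y})$.
   Context: This is the setting of a label-noise robust conditional GAN (rcGAN): only noisy labels $\tilde{y}$ are observed for real data, the clean label $\hat{y}$ is unobserved, and the generator is conditioned on a clean label $\hat{y}^g$ which is passed through the known noise transition model $p(\tilde{y}\mid\hat{y})$ before being given to the discriminator. Optimality is understood in the sense of the original GAN analysis (optimal discriminator for fixed generator, then minimization over generators). *)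

(* Defs.v *)
From HB Require Import structures.
From mathcomp Require Import all_boot all_order all_algebra.
From mathcomp Require Import all_classical all_reals all_analysis.
Set Implicit Arguments. Unset Strict Implicit. Unset Printing Implicit Defensive.
Import Order.TTheory GRing.Theory Num.Theory.
Local Open Scope classical_set_scope.
Local Open Scope ring_scope.

(* Labels Y = {1,...,c} are represented by 'I_c.
   A joint distribution p(x, y) on X x Y is represented by the family of
   (sub-probability) measures (A |-> P(x \in A, y = i))_i. *)

Definition transition_matrix (R : realType) (c : nat) (T : 'M[R]_c) : Prop :=
  (forall i j, 0 <= T i j <= 1) /\ (forall i, \sum_(j < c) T i j = 1).

Definition discriminator (d : measure_display) (X : measurableType d)
  (R : realType) (c : nat) (D : X -> 'I_c -> R) : Prop :=
  (forall j, measurable_fun setT (fun x => D x j)) /\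
  (forall x j, 0 < D x j < 1).

Definition label_prior (d : measure_display) (X : measurableType d)
  (R : realType) (c : nat) (mu : 'I_c -> {measure set X -> \bar R}) (i : 'I_c) : R :=
  fine (mu i setT).

(* The generator is identified (nonparametrically) with the
   conditional laws g i of G(z, i), z ~ p(z). *)
Definition rcGAN_obj (d : measure_display) (X : measurableType d)
  (R : realType) (c : nat) (T : 'M[R]_c)
  (mu nu : 'I_c -> {measure set X -> \bar R})
  (g : 'I_c -> probability X R) (D : X -> 'I_c -> R) : \bar R :=
  ((\sum_(j < c) \int[nu j]_x (ln (D x j))%:E) +
   (\sum_(i < c) \sum_(j < c)
       ((label_prior mu i * T i j)%:E * \int[g i]_x (ln (1 - D x j))%:E)))%E.

Definition rcGAN_value (d : measure_display) (X : measurableType d)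
  (R : realType) (c : nat) (T : 'M[R]_c)
  (mu nu : 'I_c -> {measure set X -> \bar R})
  (g : 'I_c -> probability X R) : \bar R :=
  ereal_sup [set rcGAN_obj T mu nu g D | D in [set D | discriminator D]].

Definition optimal_generator (d : measure_display) (X : measurableType d)
  (R : realType) (c : nat) (T : 'M[R]_c)
  (mu nu : 'I_c -> {measure set X -> \bar R})
  (g : 'I_c -> probability X R) : Prop :=
  forall g' : 'I_c -> probability X R,
    (rcGAN_value T mu nu g <= rcGAN_value T mu nu g')%E.

(* Main.v *)
Require Import Defs.
From HB Require Import structures.
From mathcomp Require Import all_boot all_order all_algebra.
From mathcomp Require Import all_classical all_reals all_analysis.
From mathcomp Require Import measurable_realfun lebesgue_integral_nonneg.
From mathcomp Require Import ring lra.
Set Implicit Arguments. Unset Strict Implicit. Unset Printing Implicit Defensive.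
Import Order.TTheory GRing.Theory Num.Theory.
Local Open Scope classical_set_scope.
Local Open Scope ring_scope.
Section wsum.
Local Open Scope ereal_scope.
Context d (X : measurableType d) (R : realType) (n : nat).
Variables (ms : 'I_n -> {measure set X -> \bar R}) (w : 'I_n -> {nonneg R}).

Definition wseq : {measure set X -> \bar R}^nat := fun k =>
  match (insub k : option 'I_n) with
  | Some i => mscale (w i) (ms i) | None => mzero end.

Definition wsum : {measure set X -> \bar R} := msum wseq n.

Lemma wsumE A : wsum A = \sum_(i < n) (w i)%:num%:E * ms i A.
Proof.
rewrite /wsum /msum; apply: eq_bigr => i _.
by rewrite /wseq valK.
Qed.

Lemma int_wsum_ge0 (f : X -> \bar R) : (forall x, 0 <= f x) ->
  measurable_fun [set: X] f ->
  \int[wsum]_x f x = \sum_(i < n) (w i)%:num%:E * \int[ms i]_x f x.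
Proof.
move=> f0 mf; rewrite ge0_integral_measure_sum//; apply: eq_bigr => i _.
by rewrite /wseq valK ge0_integral_mscale.
Qed.

Lemma int_wsum_le0 (f : X -> \bar R) : (forall x, f x <= 0) ->
  measurable_fun [set: X] f ->
  \int[wsum]_x f x = \sum_(i < n) (w i)%:num%:E * \int[ms i]_x f x.
Proof.
move=> f0 mf.
have Nf0 x : 0 <= - f x by rewrite oppe_ge0.
have mNf : measurable_fun setT (fun x => - f x) by exact: measurableT_comp.
have E (m : {measure set X -> \bar R}) : \int[m]_x f x = - \int[m]_x - f x.
  by rewrite -integral_ge0N//; apply: eq_integral => x _; rewrite /= oppeK.
rewrite E int_wsum_ge0// -sumeN; last first.
  by move=> i j _ _; rewrite ge0_adde_def// inE mule_ge0// integral_ge0.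
by apply: eq_bigr => i _; rewrite E muleN.
Qed.

End wsum.

Lemma int_transfer d (X : measurableType d) (R : realType)
  (m1 m2 : {measure set X -> \bar R}) (f : X -> \bar R) :
  (forall A, measurable A -> m1 A = m2 A) ->
  (\int[m1]_x f x = \int[m2]_x f x)%E.
Proof. by move=> h; apply: eq_measure_integral => A mA _; exact: h. Qed.

Lemma int_two d (X : measurableType d) (R : realType)
  (m : {measure set X -> \bar R}) (A : set X) (u v : R) :
  measurable A -> u <= 0 -> v <= 0 ->
  (\int[m]_x (if x \in A then u else v)%:E = u%:E * m A + v%:E * m (~` A))%E.
Proof.
move=> mA u0 v0.
have mAC : measurable (~` A) by exact: measurableC.
have -> : (fun x => (if x \in A then u else v)%:E) =
   (fun x => - ((-u)%:E * (\1_A x)%:E + (-v)%:E * (\1_(~` A) x)%:E))%E.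
  apply/funext => x; rewrite /indic; case: ifPn => xA.
    by rewrite (_ : x \in ~` A = false) ?mule0 ?mule1 ?adde0 ?EFinN ?oppeK//; apply/negbTE; rewrite in_setC xA.
  by rewrite (_ : x \in ~` A = true) ?mule0 ?mule1 ?add0e ?EFinN ?oppeK//; rewrite in_setC xA.
rewrite integral_ge0N; last first.
  by move=> x _; rewrite adde_ge0// mule_ge0// lee_fin ?oppr_ge0// ?indic_ge0.
rewrite ge0_integralD//; last 4 first.
- by move=> x _; rewrite mule_ge0// lee_fin ?oppr_ge0.
- apply: measurable_funeM; exact/measurable_EFinP/measurable_indic.
- by move=> x _; rewrite mule_ge0// lee_fin ?oppr_ge0.
- apply: measurable_funeM; exact/measurable_EFinP/measurable_indic.
rewrite !ge0_integralZl//; try by rewrite lee_fin oppr_ge0.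
all: try exact/measurable_EFinP/measurable_indic.
all: try by move=> x _; rewrite lee_fin.
rewrite !integral_indic// !setIT oppeD; last first.
  by rewrite ge0_adde_def// inE mule_ge0// ?lee_fin ?oppr_ge0// measure_ge0.
by rewrite !EFinN !mulNe !oppeK.
Qed.
Lemma ln_lb (R : realType) (t : R) : -1 < t -> t / (1 + t) <= ln (1 + t).
Proof.
move=> t1.
have p : 0 < 1 + t by lra.
have h := @le_ln1Dx R (- (t / (1 + t))).
have e : 1 + - (t / (1 + t)) = (1 + t)^-1 by field; rewrite gt_eqF.
rewrite e lnV ?posrE// in h.
suff : - 1 < - (t / (1 + t)) by move=> /h; rewrite lerN2.
rewrite ltrN2 ltr_pdivrMr//; lra.
Qed.

Lemma key_ineq (R : realType) (a b : R) : 0 <= a -> 0 <= b -> a != b ->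
  -1 < (a - b) / (2 * (a + b)) < 1 /\
  0 < a * ln (1 + (a - b) / (2 * (a + b))) + b * ln (1 - (a - b) / (2 * (a + b))).
Proof.
move=> a0 b0 ab.
have s0 : 0 < a + b.
  rewrite lt_neqAle addr_ge0// andbT; apply: contraNneq ab => h.
  have : a = 0 by lra. move=> a00; have : b = 0 by lra. by move=> ->; rewrite a00.
set t := (a - b) / (2 * (a + b)).
have ht : t * (2 * (a + b)) = a - b by rewrite /t mulfVK// mulf_neq0// gt_eqF.
have t1 : -1 < t by nra.
have t2 : t < 1 by nra.
split; first by rewrite t1 t2.
have l1 := ln_lb t1.
have l2 : - t / (1 - t) <= ln (1 - t).
  have := @ln_lb R (- t) ltac:(lra). by rewrite mulNr.
have p1 : 0 < 1 + t by lra.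
have p2 : 0 < 1 - t by lra.
apply: (@lt_le_trans _ _ (a * (t / (1 + t)) + b * (- t / (1 - t)))); last first.
  by apply: lerD; apply: ler_wpM2l.
have key : a * (t / (1 + t)) + b * (- t / (1 - t)) =
   (a - b) ^+ 2 / (4 * (a + b) * ((1 + t) * (1 - t))).
  apply: (@mulIf _ ((1 + t) * (1 - t))); first by rewrite mulf_neq0// gt_eqF.
  have -> : (a - b) ^+ 2 / (4 * (a + b) * ((1 + t) * (1 - t))) * ((1 + t) * (1 - t))
    = (a - b) ^+ 2 / (4 * (a + b)).
    by field; rewrite !gt_eqF.
  have -> : a * (t / (1 + t)) + b * (- t / (1 - t)) = a * t / (1 + t) - b * t / (1 - t).
    by ring.
  rewrite mulrBl.
  have -> : a * t / (1 + t) * ((1 + t) * (1 - t)) = a * t * (1 - t).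
    by field; rewrite gt_eqF.
  have -> : b * t / (1 - t) * ((1 + t) * (1 - t)) = b * t * (1 + t).
    by field; rewrite gt_eqF.
  apply: (@mulIf _ (4 * (a + b))); first by rewrite mulf_neq0// gt_eqF.
  rewrite mulfVK; last by rewrite mulf_neq0// gt_eqF.
  have e : 2 * (a + b) * t = a - b by rewrite mulrC.
  have -> : (a * t * (1 - t) - b * t * (1 + t)) * (4 * (a + b)) =
    2 * ((a - b) * (2 * (a + b) * t)) - (2 * (a + b) * t) ^+ 2 by ring.
  rewrite e; ring.
have sq : 0 < (a - b) ^+ 2 by rewrite exprn_even_gt0//= subr_eq0.
rewrite key; apply: divr_gt0 => //; apply: mulr_gt0; first by rewrite mulr_gt0.
exact: mulr_gt0.
Qed.

Section generic.
Local Open Scope ereal_scope.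
Context d (X : measurableType d) (R : realType).
Implicit Types m : {measure set X -> \bar R}.

Lemma fin_of m A : measurable A -> m setT \is a fin_num ->
  m A = (fine (m A))%:E.
Proof.
move=> mA mT; rewrite fineK// ge0_fin_numE//.
apply: (le_lt_trans (le_measure _ _ _ (subsetT A))); rewrite ?inE//.
by rewrite -ge0_fin_numE.
Qed.

Lemma fine_addC m A : measurable A -> m setT \is a fin_num ->
  (fine (m A) + fine (m (~` A)) = fine (m setT))%R.
Proof.
move=> mA mT; have mAC : measurable (~` A) by exact: measurableC.
rewrite -(setUv A) measureU//; last by rewrite setICr.
have fA : m A \is a fin_num by rewrite (fin_of mA mT).
have fAC : m (~` A) \is a fin_num by rewrite (fin_of mAC mT).
by rewrite fineD ?inE.
Qed.

Lemma le0_sum_int m (f h : X -> \bar R) (K : R) :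
  (forall x, f x <= 0) -> (forall x, h x <= 0) ->
  measurable_fun setT f -> measurable_fun setT h -> (K <= 0)%R ->
  (forall x, f x + h x <= K%:E) ->
  \int[m]_x f x + \int[m]_x h x <= K%:E * m setT.
Proof.
move=> f0 h0 mf mh K0 fh.
have E (k : X -> \bar R) : (forall x, k x <= 0) -> \int[m]_x k x = - \int[m]_x - k x.
  move=> k0; rewrite -integral_ge0N; last by move=> x _; rewrite oppe_ge0.
  by apply: eq_integral => x _; rewrite /= oppeK.
rewrite (E f)// (E h)// -oppeD; last first.
  by rewrite ge0_adde_def// inE integral_ge0// => x _; rewrite oppe_ge0.
rewrite -ge0_integralD//; last 4 first.
- by move=> x _; rewrite oppe_ge0.
- exact: measurableT_comp.
- by move=> x _; rewrite oppe_ge0.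
- exact: measurableT_comp.
rewrite leeNl -mulNe -EFinN.
have := integral_cst m measurableT (- K)%:E.
rewrite /cst => <-.
apply: ge0_le_integral => //.
- by move=> x _; rewrite lee_fin oppr_ge0.
- by apply: emeasurable_funD; exact: measurableT_comp.
- move=> x _; rewrite EFinN -oppeD; last by rewrite -adde_defNN ge0_adde_def// inE oppe_ge0.
  by rewrite leeN2.
Qed.

End generic.

Lemma unit_row (R : realType) (c : nat) (T : 'M[R]_c) (dl : 'I_c -> R) :
  T \in unitmx -> (forall j, \sum_(i < c) dl i * T i j = 0) -> forall i, dl i = 0.
Proof.
move=> uT h i.
pose v : 'rV[R]_c := \row_i dl i.
have vT : v *m T = 0.
  apply/rowP => j; rewrite !mxE -[RHS](h j); apply: eq_bigr => k _; by rewrite mxE.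
have : v = 0 by rewrite -(mulmxK uT v) vT mul0mx.
by move/rowP => /(_ i); rewrite !mxE.
Qed.

Section main.
Local Open Scope ereal_scope.
Context d (X : measurableType d) (R : realType) (c : nat) (T : 'M[R]_c)
  (mu nu : 'I_c -> {measure set X -> \bar R}).
Hypotheses (HT : transition_matrix T) (Hmu : \sum_(i < c) mu i setT = 1)
  (Hnu : forall j (A : set X), measurable A ->
      nu j A = \sum_(i < c) (T i j)%:E * mu i A).

Let pi i := label_prior mu i.

Lemma T_ge0 i j : (0 <= T i j)%R.
Proof. by case: HT => h _; case/andP: (h i j). Qed.

Lemma sumT i : (\sum_(j < c) T i j = 1)%R.
Proof. by case: HT. Qed.

Lemma muT_fin i : mu i setT \is a fin_num.
Proof.
rewrite ge0_fin_numE//; apply: (@le_lt_trans _ _ 1); last exact: ltry.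
by rewrite -Hmu (bigD1 i)//= leeDl// sume_ge0.
Qed.

Lemma muTE i : mu i setT = (pi i)%:E.
Proof. by rewrite /pi /label_prior fineK// muT_fin. Qed.

Lemma pi_ge0 i : (0 <= pi i)%R.
Proof. exact: fine_ge0. Qed.

Lemma sum_pi : (\sum_(i < c) pi i = 1)%R.
Proof.
have : \sum_(i < c) (pi i)%:E = 1 by rewrite -Hmu; apply: eq_bigr => i _; rewrite muTE.
by rewrite sumEFin => -[].
Qed.

Definition wt j : 'I_c -> {nonneg R} := fun i => NngNum (mulr_ge0 (pi_ge0 i) (T_ge0 i j)).

Definition rho (g : 'I_c -> probability X R) j : {measure set X -> \bar R} :=
  wsum (fun i => (g i : {measure set X -> \bar R})) (wt j).

Lemma rhoE g j A : rho g j A = \sum_(i < c) (pi i * T i j)%:E * g i A.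
Proof. by rewrite /rho wsumE. Qed.

Lemma rhoT g j : rho g j setT = (\sum_(i < c) pi i * T i j)%:E.
Proof.
rewrite rhoE -sumEFin; apply: eq_bigr => i _.
by rewrite probability_setT mule1.
Qed.

Lemma rhoT_fin g j : rho g j setT \is a fin_num.
Proof. by rewrite rhoT. Qed.

Lemma nuT j : nu j setT = (\sum_(i < c) T i j * pi i)%:E.
Proof.
rewrite Hnu// -sumEFin; apply: eq_bigr => i _.
by rewrite muTE EFinM.
Qed.

Lemma nuT_fin j : nu j setT \is a fin_num.
Proof. by rewrite nuT. Qed.

Lemma sum_nuT : (\sum_(j < c) fine (nu j setT) = 1)%R.
Proof.
under eq_bigr do rewrite nuT /=.
rewrite exchange_big /= -sum_pi; apply: eq_bigr => i _.
by rewrite -mulr_suml sumT mul1r.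
Qed.

Lemma sum_rhoT g : (\sum_(j < c) fine (rho g j setT) = 1)%R.
Proof.
under eq_bigr do rewrite rhoT /=.
rewrite exchange_big /= -sum_pi; apply: eq_bigr => i _.
by rewrite -mulr_sumr sumT mulr1.
Qed.

Lemma obj_dec g D : discriminator D ->
  rcGAN_obj T mu nu g D = \sum_(j < c) (\int[nu j]_x (ln (D x j))%:E +
     \int[rho g j]_x (ln (1 - D x j))%:E).
Proof.
case=> mD D01.
rewrite /rcGAN_obj exchange_big /= -big_split /=; apply: eq_bigr => j _.
congr (_ + _); rewrite /rho int_wsum_le0//.
- by move=> x; rewrite lee_fin ln_le0// lerBlDr lerDl; case/andP: (D01 x j) => /ltW.
- apply/measurable_EFinP; apply: measurableT_comp; first exact: measurable_ln.
  by apply: measurable_funB => //; exact: mD.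
Qed.


Definition Dt (j0 : 'I_c) (A : set X) (t : R) : X -> 'I_c -> R :=
  fun x j => if (j == j0) && (x \in A) then ((1 + t) / 2)%R else (2^-1)%R.

Lemma Dt_disc j0 A t : measurable A -> (-1 < t < 1)%R -> discriminator (Dt j0 A t).
Proof.
move=> mA /andP[t1 t2]; split.
- move=> j; have -> : (fun x => Dt j0 A t x j) =
      (fun x => 2^-1 + ((j == j0)%:R * (t / 2)) * \1_A x)%R.
    apply/funext => x; rewrite /Dt /indic; case: (j == j0); case: (x \in A) => /=;
      rewrite ?mul1r ?mul0r ?mulr1 ?mulr0 ?addr0//.
    by rewrite mulrDl mul1r.
  apply: measurable_funD => //; apply: measurable_funM => //.
- move=> x j; rewrite /Dt; case: ifPn => _.
    apply/andP; split; first by rewrite divr_gt0//; lra.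
    by rewrite ltr_pdivrMr//; lra.
  by apply/andP; split; [rewrite invr_gt0 | rewrite invf_lt1]; rewrite ?ltr1n.
Qed.


Lemma obj_Dt g j0 A t : measurable A -> (-1 < t < 1)%R ->
  rcGAN_obj T mu nu g (Dt j0 A t) =
  ((2 * ln 2^-1) + fine (nu j0 A) * ln (1 + t) + fine (rho g j0 A) * ln (1 - t))%:E.
Proof.
move=> mA ht; have mAC := measurableC mA.
have /andP[t1 t2] := ht.
rewrite obj_dec; last exact: Dt_disc.
pose l : R := ln 2^-1.
pose u1 := fun j : 'I_c => if j == j0 then ln ((1 + t) / 2) else l.
pose u2 := fun j : 'I_c => if j == j0 then ln ((1 - t) / 2) else l.
have e1 j : (fun x => (ln (Dt j0 A t x j))%:E) =
    (fun x => (if x \in A then u1 j else l)%:E).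
  by apply/funext => x; rewrite /Dt /u1; case: (j == j0); case: (x \in A).
have e2 j : (fun x => (ln (1 - Dt j0 A t x j))%:E) =
    (fun x => (if x \in A then u2 j else l)%:E).
  have h1 : (1 - (1 + t) / 2 = (1 - t) / 2)%R by field.
  have h2 : (1 - 2^-1 = 2^-1 :> R)%R by field.
  by apply/funext => x; rewrite /Dt /u2; case: (j == j0); case: (x \in A);
    rewrite /= ?h1 ?h2.
have l0 : (l <= 0)%R by apply: ln_le0; rewrite invf_le1// ler1n.
have u10 j : (u1 j <= 0)%R.
  by rewrite /u1; case: ifP => // _; apply: ln_le0; rewrite ler_pdivrMr//; lra.
have u20 j : (u2 j <= 0)%R.
  by rewrite /u2; case: ifP => // _; apply: ln_le0; rewrite ler_pdivrMr//; lra.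
under eq_bigr => j _.
  rewrite e1 e2 !int_two// [nu j A](fin_of mA (nuT_fin j)).
  rewrite [nu j (~` A)](fin_of mAC (nuT_fin j)).
  rewrite [rho g j A](fin_of mA (rhoT_fin g j)).
  rewrite [rho g j (~` A)](fin_of mAC (rhoT_fin g j)).
  rewrite -!EFinM -!EFinD.
  over.
rewrite sumEFin; congr EFin.
have eq j : (u1 j * fine (nu j A) + l * fine (nu j (~` A)) +
     (u2 j * fine (rho g j A) + l * fine (rho g j (~` A))) =
   l * fine (nu j setT) + l * fine (rho g j setT) +
   (j == j0)%:R * (fine (nu j A) * ln (1 + t) + fine (rho g j A) * ln (1 - t)))%R.
  rewrite -(fine_addC mA (nuT_fin j)) -(fine_addC mA (rhoT_fin g j)).
  rewrite /u1 /u2; case: (j == j0) => /=; last by rewrite mul0r addr0; ring.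
  rewrite mul1r !lnM ?posrE ?invr_gt0 ?ltr0n//; try lra.
  rewrite /l; ring.
under eq_bigr do rewrite eq.
rewrite big_split /= big_split /= -!mulr_sumr sum_nuT sum_rhoT.
rewrite (bigD1 j0)//= eqxx mul1r big1 ?addr0; last first.
  by move=> j /negbTE ->; rewrite mul0r.
rewrite /l; ring.
Qed.


Lemma obj_le g D : discriminator D ->
  (forall j A, measurable A -> nu j A = rho g j A) ->
  rcGAN_obj T mu nu g D <= (2 * ln 2^-1)%:E.
Proof.
move=> HD H; have [mD D01] := HD.
rewrite obj_dec//.
have l4 x j : (ln (D x j) + ln (1 - D x j) <= 2 * ln 2^-1)%R.
  have /andP[a b] := D01 x j.
  rewrite -lnM ?posrE ?subr_gt0// mulr_natl mulr2n -lnM ?posrE ?invr_gt0//.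
  rewrite ler_ln ?posrE ?mulr_gt0 ?subr_gt0 ?invr_gt0//.
  have -> : (2^-1 * 2^-1 = 4^-1 :> R)%R by field.
  rewrite -subr_ge0.
  have -> : (4^-1 - D x j * (1 - D x j) = (D x j - 2^-1) ^+ 2 :> R)%R by field.
  exact: sqr_ge0.
apply: (@le_trans _ _ (\sum_(j < c) (2 * ln 2^-1 * fine (rho g j setT))%:E)).
  apply: lee_sum => j _.
  rewrite (int_transfer _ (H j)) EFinM (fineK (rhoT_fin g j)).
  apply: le0_sum_int.
  - by move=> x; rewrite lee_fin; apply: ln_le0; case/andP: (D01 x j) => _ /ltW.
  - by move=> x; rewrite lee_fin; apply: ln_le0; rewrite lerBlDr lerDl;
      case/andP: (D01 x j) => /ltW.
  - apply/measurable_EFinP; apply: measurableT_comp; first exact: measurable_ln.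
    exact: mD.
  - apply/measurable_EFinP; apply: measurableT_comp; first exact: measurable_ln.
    by apply: measurable_funB => //; exact: mD.
  - by rewrite pmulr_rle0 ?ltr0n// ln_le0// invf_le1// ler1n.
  - by move=> x; rewrite -EFinD lee_fin.
by rewrite sumEFin -mulr_sumr sum_rhoT mulr1.
Qed.

Definition matched (g : 'I_c -> probability X R) :=
  forall i (A : set X), measurable A -> (pi i)%:E * g i A = mu i A.

Lemma matched_nu g : matched g -> forall j A, measurable A -> nu j A = rho g j A.
Proof.
move=> Hg j A mA; rewrite Hnu// rhoE; apply: eq_bigr => i _.
by rewrite -Hg// muleA -EFinM mulrC.
Qed.

Lemma V_le g : matched g -> rcGAN_value T mu nu g <= (2 * ln 2^-1)%:E.
Proof.
move=> Hg; apply: ge_ereal_sup => _ [D HD <-].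
exact: obj_le HD (matched_nu Hg).
Qed.

Lemma V_ge_obj g D : discriminator D -> rcGAN_obj T mu nu g D <= rcGAN_value T mu nu g.
Proof. by move=> HD; apply: ereal_sup_ubound; exists D. Qed.

Lemma V_ge g : (2 * ln 2^-1)%:E <= rcGAN_value T mu nu g.
Proof.
case: (pickP (fun _ : 'I_c => true)) => [j0 _|h]; last first.
  exfalso; move: Hmu; rewrite big1; last by move=> i; have := h i.
  by move=> /esym/eqP; rewrite onee_eq0.
have t0 : (-1 < (0:R) < 1)%R by rewrite ltr01 andbT ltrN10.
apply: le_trans (V_ge_obj g (Dt_disc j0 measurable0 t0)).
by rewrite obj_Dt// ?subr0 ?addr0 ln1 !mulr0 !addr0.
Qed.

Lemma V_gt g j0 A : measurable A -> fine (nu j0 A) != fine (rho g j0 A) ->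
  (2 * ln 2^-1)%:E < rcGAN_value T mu nu g.
Proof.
move=> mA ab.
have a0 : (0 <= fine (nu j0 A))%R by apply: fine_ge0.
have b0 : (0 <= fine (rho g j0 A))%R by apply: fine_ge0.
have [ht hpos] := key_ineq a0 b0 ab.
apply: lt_le_trans (V_ge_obj g (Dt_disc j0 mA ht)).
rewrite obj_Dt// lte_fin -addrA ltrDl.
exact: hpos.
Qed.


Lemma mismatch (g : 'I_c -> probability X R) i0 A : T \in unitmx -> measurable A ->
  (pi i0)%:E * g i0 A != mu i0 A -> exists j, fine (nu j A) != fine (rho g j A).
Proof.
move=> uT mA hne.
have gA i : g i A = (fine (g i A))%:E.
  by apply: fin_of => //; apply: fin_num_measure.
have muA i : mu i A = (fine (mu i A))%:E := fin_of mA (muT_fin i).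
pose dl i := (fine (mu i A) - pi i * fine (g i A))%R.
apply: contrapT => nex.
have h j : (\sum_(i < c) dl i * T i j = 0)%R.
  have : fine (nu j A) = fine (rho g j A).
    by apply: contrapT => hh; apply: nex; exists j; apply/eqP.
  rewrite Hnu// rhoE.
  under eq_bigr do rewrite muA -EFinM.
  under [X in _ = fine X]eq_bigr do rewrite gA -EFinM.
  rewrite !sumEFin /= => e.
  transitivity (\sum_(i < c) T i j * fine (mu i A) -
     \sum_(i < c) pi i * T i j * fine (g i A))%R; last by rewrite e subrr.
  rewrite -sumrB; apply: eq_bigr => i _.
  by rewrite /dl; ring.
have := unit_row uT h i0; rewrite /dl => /eqP; rewrite subr_eq0 => /eqP e.
by move/negP: hne; apply; rewrite gA muA -EFinM e.
Qed.

Lemma gstar_matched (g : 'I_c -> probability X R) :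
  matched (fun i => (mnormalize (mu i) (g i) : probability X R)).
Proof.
move=> i A mA /=; rewrite /mnormalize /=; case: ifPn.
- move=> /orP[/eqP h0|/eqP hoo].
  + have -> : pi i = 0%R by rewrite /pi /label_prior h0.
    rewrite mul0e; apply/esym/eqP; rewrite eq_le measure_ge0 andbT -h0.
    by rewrite le_measure ?inE.
  + by have := muT_fin i; rewrite hoo.
- rewrite negb_or => /andP[h0 _].
  rewrite muleCA -EFinM /pi /label_prior divff ?mule1//.
  by rewrite fine_eq0 // muT_fin.
Qed.

End main.

Unset Implicit Arguments.

Theorem theorem2 (d : measure_display) (X : measurableType d) (R : realType)
  (c : nat) (T : 'M[R]_c)
  (mu nu : 'I_c -> {measure set X -> \bar R})
  (g : 'I_c -> probability X R) :
  transition_matrix T ->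
  (\sum_(i < c) mu i setT = 1)%E ->
  (forall j (A : set X), measurable A ->
      nu j A = (\sum_(i < c) (T i j)%:E * mu i A)%E) ->
  T \in unitmx ->
  (optimal_generator T mu nu g <->
   forall i (A : set X), measurable A ->
     ((label_prior mu i)%:E * g i A)%E = mu i A).
Proof.
move=> HT Hmu Hnu uT; split.
- move=> opt i A mA; apply: contrapT => hne.
  have hne' : ((label_prior mu i)%:E * g i A != mu i A)%E by apply/eqP.
  have [j hj] := mismatch HT Hmu Hnu uT mA hne'.
  have h1 := V_gt (HT:=HT) Hmu Hnu mA hj.
  have h2 := V_le HT Hmu Hnu (gstar_matched Hmu g).
  have h3 := opt (fun i => (mnormalize (mu i) (g i) : probability X R)).
  have := lt_le_trans h1 (le_trans h3 h2).
  by rewrite ltxx.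
- move=> Hm g'.
  exact: le_trans (V_le HT Hmu Hnu Hm) (V_ge HT Hmu Hnu g').
Qed.
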